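(* For every finite rooted ordered tree $\mathbf{t}$ and every $k\in\mathbb{N}^*$, \[ 0\le D_k(\mathbf{t})-\mathcal{D}_k(\mathbf{t})\le|\mathbf{t}|^k. \]
   Context: For a finite rooted ordered tree $\mathbf{t}$ with root $\emptyset$, $|\mathbf{t}|$ is its number of nodes and $d$ the graph distance. For $\mathbf{u}=(u_1,\dots,u_k)\in\mathbf{t}^k$, $\mathfrak{m}(\mathbf{u})$ is the most recent common ancestor of $u_1,\dots,u_k$, and $D_k(\mathbf{t})=\sum_{\mathbf{u}\in\mathbf{t}^k}d(\emptyset,\mathfrak{m}(\mathbf{u}))$. The contour process $C^{\mathbf{t}}$ is the continuous function on $[0,2|\mathbf{t}|]$ giving the distance to the root of a particle that starts at the root and traverses each edge (of length 1) at unit speed, visiting the nodes in depth-first lexicographic order and returning to the root at time $2|\mathbf{t}|-2$; $C^{\mathbf{t}}=0$ on $[2|\mathbf{t}|-2,2|\mathbf{t}|]$. For a function $h$ and reals $s,t$ in its domain, $m_h(s,t)=\inf_{u\in[s\wedge t,s\vee t]}h(u)$. For $x=(x_1,\dots,x_k)$, $x_{(1)}\le\dots\le x_{(k)}$ is its order statistic, and $\mathcal{D}_k(\mathbf{t})=\int_{[0,|\mathbf{t}|]^k}m_{C^{\mathbf{t}}}(2x_{(1)},2x_{(k)})\,dx$ (for $k=1$ this is $\int_0^{|\mathbf{t}|}C^{\mathbf{t}}(2x)dx$). *)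

(* Defs.v *)
From Stdlib Require Import Reals List.
From Coquelicot Require Import Coquelicot.
Import ListNotations.
Open Scope R_scope.

Inductive tree : Type := Node : list tree -> tree.

(* Nodes as Ulam-Harris words, listed in depth-first lexicographic order.
   The root is the empty word []. *)
Fixpoint nodes (t : tree) : list (list nat) :=
  match t with
  | Node cs =>
      [] :: (fix aux (i : nat) (cs : list tree) : list (list nat) :=
               match cs with
               | nil => nil
               | c :: cs' => map (cons i) (nodes c) ++ aux (S i) cs'
               end) 0%nat cs
  end.

Definition size (t : tree) : nat := length (nodes t).

(* longest common prefix = most recent common ancestor of two words *)
Fixpoint lcp (u v : list nat) : list nat :=
  match u, v with
  | a :: u', b :: v' => if Nat.eqb a b then a :: lcp u' v' else []
  | _, _ => []
  end.

Fixpoint mrca (us : list (list nat)) : list nat :=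
  match us with
  | [] => []
  | [u] => u
  | u :: us' => lcp u (mrca us')
  end.

Fixpoint tuples {A : Type} (k : nat) (L : list A) : list (list A) :=
  match k with
  | O => [[]]
  | S k' => flat_map (fun x => map (cons x) (tuples k' L)) L
  end.

(* D_k(t) = sum over u in t^k of d(root, m(u)) = |m(u)| *)
Definition Dk (k : nat) (t : tree) : nat :=
  fold_right Nat.add 0%nat (map (fun us => length (mrca us)) (tuples k (nodes t))).

(* Heights visited by the contour particle at integer times 0,1,...,2|t|-2. *)
Fixpoint contour_seq (t : tree) : list nat :=
  match t with
  | Node cs =>
      0%nat :: (fix aux (cs : list tree) : list nat :=
                  match cs with
                  | nil => nil
                  | c :: cs' => map S (contour_seq c) ++ [0%nat] ++ aux cs'
                  end) cs
  end.

(* Contour process C^t : linear interpolation of the contour sequence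
   (unit speed along edges of length 1), and 0 after time 2|t|-2
   (nth defaults to 0 past the end of the sequence, whose last entry is 0).
   Only its values on [0, 2|t|] matter. *)
Definition contour (t : tree) (s : R) : R :=
  let i := Z.to_nat (Int_part s) in
  let h0 := INR (nth i (contour_seq t) 0%nat) in
  let h1 := INR (nth (S i) (contour_seq t) 0%nat) in
  (INR i + 1 - s) * h0 + (s - INR i) * h1.

Definition mh (h : R -> R) (s t : R) : R :=
  real (Glb_Rbar (fun y => exists u, Rmin s t <= u <= Rmax s t /\ y = h u)).

Definition lmin (xs : list R) : R :=
  match xs with [] => 0 | x :: xs' => fold_right Rmin x xs' end.
Definition lmax (xs : list R) : R :=
  match xs with [] => 0 | x :: xs' => fold_right Rmax x xs' end.

Fixpoint cube_int (k : nat) (a b : R) (f : list R -> R) : R :=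
  match k with
  | O => f []
  | S k' => RInt (fun x => cube_int k' a b (fun xs => f (x :: xs))) a b
  end.

Definition calDk (k : nat) (t : tree) : R :=
  cube_int k 0 (INR (size t))
    (fun xs => mh (contour t) (2 * lmin xs) (2 * lmax xs)).

(* Main.v *)
Require Import Defs.
From Stdlib Require Import Reals List Lia Lra Permutation Arith ZArith.
From Coquelicot Require Import Coquelicot.
Import ListNotations.
Open Scope R_scope.

Fixpoint tree_ind2 (P : tree -> Prop) (H : forall cs : list tree, List.Forall P cs -> P (Node cs)) (t : tree) : P t :=
  match t with Node cs => H cs ((fix f (l : list tree) : List.Forall P l :=
     match l with [] => List.Forall_nil _ | c :: l' => List.Forall_cons _ (tree_ind2 P H c) (f l') end) cs) end.

Fixpoint walk (t : tree) : list (list nat) :=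
  match t with Node cs => [] :: (fix aux (i:nat) (cs : list tree) := match cs with [] => [] | c :: cs' => map (cons i) (walk c) ++ [] :: aux (S i) cs' end) 0%nat cs end.

Fixpoint waux (i : nat) (cs : list tree) : list (list nat) :=
  match cs with [] => [] | c :: cs' => map (cons i) (walk c) ++ [] :: waux (S i) cs' end.
Fixpoint naux (i : nat) (cs : list tree) : list (list nat) :=
  match cs with [] => [] | c :: cs' => map (cons i) (nodes c) ++ naux (S i) cs' end.
Fixpoint caux (cs : list tree) : list nat :=
  match cs with [] => [] | c :: cs' => map S (contour_seq c) ++ [0%nat] ++ caux cs' end.

Lemma walk_Node cs : walk (Node cs) = [] :: waux 0 cs. Proof. reflexivity. Qed.
Lemma nodes_Node cs : nodes (Node cs) = [] :: naux 0 cs. Proof. reflexivity. Qed.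
Lemma contour_Node cs : contour_seq (Node cs) = 0%nat :: caux cs. Proof. reflexivity. Qed.

Lemma contour_walk t : contour_seq t = map (@length nat) (walk t).
Proof.
  induction t using tree_ind2.
  rewrite contour_Node, walk_Node. simpl. f_equal.
  clear -H. generalize 0%nat. induction H as [|c cs Hc Hcs IH]; intro i; simpl; auto.
  rewrite map_app. simpl. rewrite Hc. f_equal. rewrite !map_map. reflexivity. simpl. f_equal. apply IH.
Qed.

Definition deeper (u v : list nat) : list nat := if Nat.ltb (length u) (length v) then v else u.

Fixpoint stp (L : list (list nat)) : list (list nat) :=
  match L with
  | u :: ((v :: _) as rest) => deeper u v :: stp rest
  | _ => []
  end.

Lemma stp_cons2 u v L : stp (u :: v :: L) = deeper u v :: stp (v :: L).
Proof. reflexivity. Qed.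
Lemma deeper_cons i u v : deeper (i :: u) (i :: v) = i :: deeper u v.
Proof. unfold deeper. cbn [length]. change (Nat.ltb (S (length u)) (S (length v))) with (Nat.ltb (length u) (length v)). destruct (Nat.ltb (length u) (length v)); reflexivity. Qed.

Lemma stp_app A u B : stp (A ++ u :: B) = stp (A ++ [u]) ++ stp (u :: B).
Proof.
  induction A as [|a A IH]; simpl; auto.
  destruct A as [|a' A']; simpl; auto.
  simpl in IH. rewrite IH. reflexivity.
Qed.

Lemma stp_map_cons i L : stp (map (cons i) L) = map (cons i) (stp L).
Proof.
  induction L as [|u L IH]; [reflexivity|].
  destruct L as [|v L']; [reflexivity|].
  change (map (cons i) (u :: v :: L')) with ((i::u) :: (i::v) :: map (cons i) L').
  change (map (cons i) (v :: L')) with ((i::v) :: map (cons i) L') in IH.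
  rewrite !stp_cons2, IH, deeper_cons. reflexivity.
Qed.

Lemma walk_hd t : exists Y, walk t = [] :: Y.
Proof. destruct t; eexists; reflexivity. Qed.
Lemma nodes_hd t : exists Y, nodes t = [] :: Y.
Proof. destruct t; eexists; reflexivity. Qed.

Lemma waux_snoc i cs : waux i cs = [] \/ exists X, waux i cs = X ++ [[]].
Proof.
  revert i; induction cs as [|c cs IH]; intro i; simpl; auto.
  right. destruct (IH (S i)) as [E|[X E]]; rewrite E.
  - exists (map (cons i) (walk c)). reflexivity.
  - exists (map (cons i) (walk c) ++ [] :: X). rewrite <- app_assoc. reflexivity.
Qed.

Lemma walk_snoc t : exists X, walk t = X ++ [[]].
Proof.
  destruct t as [cs]. rewrite walk_Node. destruct (waux_snoc 0 cs) as [E|[X E]]; rewrite E.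
  - exists []. reflexivity.
  - exists ([] :: X). reflexivity.
Qed.

Lemma block_stp i c : stp ([] :: map (cons i) (walk c) ++ [[]]) = [i] :: map (cons i) (stp (walk c)) ++ [[i]].
Proof.
  destruct (walk_hd c) as [Y EY]. destruct (walk_snoc c) as [X EX].
  assert (E1 : stp ([] :: map (cons i) (walk c) ++ [[]]) = stp ([] :: map (cons i) (walk c)) ++ [[i]]).
  { rewrite EX at 1 2. rewrite map_app. simpl map.
    rewrite <- app_assoc.
    change ([] :: map (cons i) X ++ [[i]] ++ [[]]) with (([] :: map (cons i) X) ++ [[i]] ++ [[]]).
    change ([] :: map (cons i) X ++ [[i]]) with (([] :: map (cons i) X) ++ [[i]]).
    simpl app at 2. rewrite stp_app. reflexivity. }
  rewrite E1. rewrite <- stp_map_cons. rewrite EY. simpl map. rewrite stp_cons2. reflexivity.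
Qed.

Lemma perm_mix {A} (M N : list A) x : Permutation ((M ++ M) ++ x :: N ++ N) ((M ++ N) ++ x :: M ++ N).
Proof.
  rewrite <- !app_assoc. apply Permutation_app_head. simpl.
  eapply Permutation_trans; [|apply Permutation_app_comm]. simpl.
  rewrite <- app_assoc. apply Permutation_sym, Permutation_middle.
Qed.

Lemma perm_walk t : Permutation (stp (walk t)) (tl (nodes t) ++ tl (nodes t)).
Proof.
  induction t as [cs H] using tree_ind2.
  rewrite walk_Node, nodes_Node. simpl tl.
  generalize 0%nat. induction H as [|c cs Hc Hcs IH]; intro i; [simpl; auto|].
  cbn [waux naux].
  change ([] :: map (cons i) (walk c) ++ [] :: waux (S i) cs) with (([] :: map (cons i) (walk c)) ++ [] :: waux (S i) cs).
  rewrite stp_app. change (([] :: map (cons i) (walk c)) ++ [[]]) with ([] :: map (cons i) (walk c) ++ [[]]). rewrite block_stp.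
  destruct (nodes_hd c) as [Z EZ]. rewrite EZ in Hc |- *. cbn [tl map] in Hc |- *.
  specialize (IH (S i)).
  apply (Permutation_map (cons i)) in Hc. rewrite map_app in Hc.
  rewrite <- app_comm_cons. apply perm_skip.
  rewrite <- app_assoc. simpl app.
  eapply Permutation_trans. apply Permutation_app_tail. apply Hc.
  eapply Permutation_trans. apply Permutation_app_head. apply perm_skip. apply IH.
  apply perm_mix.
Qed.


Lemma stp_idx (L : list (list nat)) : map (fun r => deeper (nth r L []) (nth (S r) L [])) (seq 0 (length L - 1)) = stp L.
Proof.
  induction L as [|u L IH]; [reflexivity|].
  destruct L as [|v L']; [reflexivity|].
  rewrite stp_cons2, <- IH. cbn [length]. replace (S (S (length L')) - 1)%nat with (S (length (v :: L') - 1)) by (simpl; lia).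
  simpl seq. cbn [map]. f_equal. rewrite <- seq_shift, map_map. reflexivity.
Qed.

Lemma length_stp L : length (stp L) = (length L - 1)%nat.
Proof. rewrite <- stp_idx, length_map, length_seq. reflexivity. Qed.

Lemma perm_full t : Permutation (stp (walk t ++ [[];[]])) (nodes t ++ nodes t).
Proof.
  destruct (walk_snoc t) as [X EX]. destruct (nodes_hd t) as [Z EZ].
  assert (E : stp (walk t ++ [[];[]]) = stp (walk t) ++ [[];[]]).
  { rewrite EX. rewrite <- !app_assoc. simpl app. rewrite (stp_app X [] [[];[]]). reflexivity. }
  rewrite E. eapply Permutation_trans. apply Permutation_app_tail. apply perm_walk.
  rewrite EZ. simpl tl. rewrite <- app_assoc.
  apply Permutation_sym. rewrite app_assoc.
  apply Permutation_cons_app. 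
  eapply Permutation_trans. apply Permutation_sym, Permutation_middle.
  rewrite <- app_assoc. rewrite (app_assoc Z Z). apply Permutation_cons_app. rewrite app_nil_r. apply Permutation_refl.
Qed.

Lemma lcp_nil_r u : lcp u [] = [].
Proof. destruct u; reflexivity. Qed.
Lemma lcp_cons_same i u v : lcp (i :: u) (i :: v) = i :: lcp u v.
Proof. simpl. rewrite Nat.eqb_refl. reflexivity. Qed.
Lemma lcp_diag u : lcp u u = u.
Proof. induction u as [|a u IH]; simpl; auto. rewrite Nat.eqb_refl, IH; reflexivity. Qed.
Lemma lcp_sym u v : lcp u v = lcp v u.
Proof.
  revert v; induction u as [|a u IH]; intros [|b v]; simpl; auto.
  rewrite Nat.eqb_sym. destruct (Nat.eqb b a) eqn:E; auto. apply Nat.eqb_eq in E. subst. rewrite IH; auto.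
Qed.

Definition goodF (w : nat -> list nat) (n : nat) : Prop :=
  (forall p q, (p <= q < n)%nat ->
    (forall r, (p <= r <= q)%nat -> (length (lcp (w p) (w q)) <= length (w r))%nat) /\
    exists r, (p <= r <= q)%nat /\ length (lcp (w p) (w q)) = length (w r)) /\
  (forall r, (S r < n)%nat -> (length (w (S r)) <= S (length (w r)))%nat /\ (length (w r) <= S (length (w (S r))))%nat).

Definition nth' (L : list (list nat)) (r : nat) : list nat := nth r L [].

Lemma nth_gA A B r : (r < length A)%nat -> nth' (A ++ [] :: B) r = nth' A r.
Proof. intro; unfold nth'; rewrite app_nth1; auto. Qed.
Lemma nth_gM A B r : r = length A -> nth' (A ++ [] :: B) r = [].
Proof. intro; unfold nth'; rewrite app_nth2 by lia. replace (r - length A)%nat with 0%nat by lia. reflexivity. Qed.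
Lemma nth_gB A B r : (length A < r)%nat -> nth' (A ++ [] :: B) r = nth' B (r - length A - 1).
Proof. intro; unfold nth'; rewrite app_nth2 by lia. set (m := (r - length A - 1)%nat). assert (E : (r - length A)%nat = S m) by (unfold m; lia). rewrite E. reflexivity. Qed.

Lemma glue A B :
  goodF (nth' A) (length A) -> goodF (nth' B) (length B) ->
  (forall x y, In x A -> In y B -> lcp x y = []) ->
  (forall r, S r = length A -> (length (nth' A r) <= 1)%nat) ->
  ((0 < length B)%nat -> (length (nth' B 0) <= 1)%nat) ->
  goodF (nth' (A ++ [] :: B)) (length (A ++ [] :: B)).
Proof.
  intros [GA AA] [GB AB] X LA HB. rewrite length_app. simpl length.
  split.
  - intros p q Hpq.
    destruct (Nat.lt_ge_cases q (length A)) as [Hq|Hq].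
    + destruct (GA p q ltac:(lia)) as [G1 [r0 [Hr0 E0]]].
      rewrite !nth_gA by lia. split.
      * intros r Hr. rewrite nth_gA by lia. apply G1; lia.
      * exists r0. split; auto. rewrite nth_gA by lia. auto.
    + destruct (Nat.lt_ge_cases (length A) p) as [Hp|Hp].
      * destruct (GB (p - (length A) - 1)%nat (q - (length A) - 1)%nat ltac:(lia)) as [G1 [r0 [Hr0 E0]]].
        rewrite !nth_gB by lia. split.
        -- intros r Hr. rewrite nth_gB by lia. apply G1; lia.
        -- exists (r0 + (length A) + 1)%nat. split; [lia|]. rewrite nth_gB by lia.
           replace (r0 + (length A) + 1 - (length A) - 1)%nat with r0 by lia. auto.
      * assert (E : lcp (nth' (A ++ [] :: B) p) (nth' (A ++ [] :: B) q) = []).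
        { destruct (Nat.eq_dec p (length A)) as [->|Hp'].
          - rewrite nth_gM by reflexivity. reflexivity.
          - destruct (Nat.eq_dec q (length A)) as [->|Hq'].
            + rewrite (nth_gM A B (length A)) by reflexivity. apply lcp_nil_r.
            + rewrite nth_gA by lia. rewrite nth_gB by lia. apply X.
              * apply nth_In. lia.
              * apply nth_In. lia. }
        rewrite E. split.
        -- intros; simpl; lia.
        -- exists (length A). split; [lia|]. rewrite nth_gM by reflexivity. reflexivity.
  - intros r Hr.
    destruct (Nat.lt_ge_cases (S r) (length A)) as [H1|H1].
    + rewrite !nth_gA by lia. apply AA; lia.
    + destruct (Nat.eq_dec (S r) (length A)) as [H2|H2].
      * rewrite (nth_gA A B r) by lia. rewrite (nth_gM A B (S r)) by lia. simpl. specialize (LA r H2). lia.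
      * destruct (Nat.eq_dec r (length A)) as [H3|H3].
        -- rewrite (nth_gM A B r) by lia. rewrite (nth_gB A B (S r)) by lia. replace (S r - (length A) - 1)%nat with 0%nat by lia.
           simpl. assert (0 < (length B))%nat by lia. specialize (HB H). lia.
        -- rewrite !nth_gB by lia. replace (S r - (length A) - 1)%nat with (S (r - (length A) - 1)) by lia. apply AB. lia.
Qed.

Lemma nth_map_cons i A r : (r < length A)%nat -> nth' (map (cons i) A) r = i :: nth' A r.
Proof.
  intro H. unfold nth'. rewrite (nth_indep _ _ (i :: [])) by (rewrite length_map; auto).
  apply map_nth.
Qed.

Lemma good_map i A : goodF (nth' A) (length A) -> goodF (nth' (map (cons i) A)) (length (map (cons i) A)).
Proof.
  rewrite length_map. intros [G AA]. split.
  - intros p q Hpq. rewrite !nth_map_cons by lia. rewrite lcp_cons_same.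
    destruct (G p q Hpq) as [G1 [r0 [Hr0 E0]]]. split.
    + intros r Hr. rewrite nth_map_cons by lia. simpl. specialize (G1 r Hr). lia.
    + exists r0. split; auto. rewrite nth_map_cons by lia. simpl. lia.
  - intros r Hr. rewrite !nth_map_cons by lia. simpl. specialize (AA r Hr). lia.
Qed.

Lemma waux_in j cs y : In y (waux j cs) -> y = [] \/ exists j' v, y = j' :: v /\ (j <= j')%nat.
Proof.
  revert j; induction cs as [|c cs IH]; intros j Hy; simpl in Hy; [contradiction|].
  apply in_app_or in Hy. destruct Hy as [Hy|[Hy|Hy]].
  - apply in_map_iff in Hy. destruct Hy as [x [<- _]]. right. exists j, x. split; auto.
  - left; auto.
  - destruct (IH (S j) Hy) as [E|[j' [v [E Hj]]]]; auto. right. exists j', v. split; auto. lia.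
Qed.

Lemma waux_head i cs : (0 < length (waux i cs))%nat -> nth' (waux i cs) 0 = [i].
Proof.
  destruct cs as [|c cs]; simpl; intro H; [lia|].
  destruct (walk_hd c) as [Y EY]. rewrite EY. reflexivity.
Qed.

Lemma walk_last t r : S r = length (walk t) -> nth' (walk t) r = [].
Proof.
  destruct (walk_snoc t) as [X EX]. rewrite EX, length_app. simpl. intro H.
  unfold nth'. rewrite app_nth2 by lia. replace (r - length X)%nat with 0%nat by lia. reflexivity.
Qed.

Lemma good_walk t : goodF (nth' (walk t)) (length (walk t)).
Proof.
  induction t as [cs H] using tree_ind2.
  rewrite walk_Node. change ([] :: waux 0 cs) with ([] ++ [] :: waux 0 cs).
  assert (GW : forall i, goodF (nth' (waux i cs)) (length (waux i cs))).
  { induction H as [|c cs Hc Hcs IH]; intro i.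
    - split; intros; simpl in *; lia.
    - cbn [waux]. apply glue.
      + apply good_map; auto.
      + apply IH.
      + intros x y Hx Hy. apply in_map_iff in Hx. destruct Hx as [x' [<- _]].
        destruct (waux_in _ _ _ Hy) as [->|[j' [v [-> Hj]]]]; [apply lcp_nil_r|].
        simpl. destruct (Nat.eqb i j') eqn:E; auto. apply Nat.eqb_eq in E. lia.
      + intros r Hr. rewrite length_map in Hr. rewrite nth_map_cons by lia. rewrite walk_last by auto. simpl; lia.
      + intro Hl. rewrite waux_head by auto. simpl; lia. }
  apply glue.
  - split; intros; simpl in *; lia.
  - apply GW.
  - intros x y Hx; destruct Hx.
  - intros r Hr; simpl in Hr; lia.
  - intro Hl. rewrite waux_head by auto. simpl; lia.
Qed.

Section T.
Variable t : tree.
Definition w (r : nat) : list nat := nth' (walk t) r.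
Definition cc (r : nat) : nat := length (w r).
Definition lab (r : nat) : list nat := deeper (w r) (w (S r)).
Definition ee (r : nat) : nat := Nat.max (cc r) (cc (S r)).

Lemma w_over r : (length (walk t) <= r)%nat -> w r = [].
Proof. intro; unfold w, nth'; apply nth_overflow; auto. Qed.

Lemma PL p q : (p <= q)%nat ->
  (forall r, (p <= r <= q)%nat -> (length (lcp (w p) (w q)) <= cc r)%nat) /\
  exists r, (p <= r <= q)%nat /\ length (lcp (w p) (w q)) = cc r.
Proof.
  intro Hpq. destruct (Nat.lt_ge_cases q (length (walk t))) as [H|H].
  - apply (proj1 (good_walk t)). lia.
  - rewrite (w_over q H), lcp_nil_r. split.
    + intros; simpl; lia.
    + exists q. split; [lia|]. unfold cc. rewrite w_over by auto. reflexivity.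
Qed.

Lemma adj r : (cc (S r) <= S (cc r))%nat /\ (cc r <= S (cc (S r)))%nat.
Proof.
  destruct (Nat.lt_ge_cases (S r) (length (walk t))) as [H|H].
  - apply (proj2 (good_walk t)). auto.
  - unfold cc. rewrite (w_over (S r)) by auto.
    destruct (Nat.eq_dec (S r) (length (walk t))) as [E|E].
    + unfold w. rewrite walk_last by auto. simpl; lia.
    + rewrite w_over by lia. simpl; lia.
Qed.

Lemma lab_len r : length (lab r) = ee r.
Proof.
  unfold lab, deeper, ee, cc. destruct (Nat.ltb (length (w r)) (length (w (S r)))) eqn:E.
  - apply Nat.ltb_lt in E. lia.
  - apply Nat.ltb_ge in E. lia.
Qed.

Definition Qp (a b X : nat) : Prop :=
  (X <= ee a)%nat /\ (forall r, (a < r <= b)%nat -> (X <= cc r)%nat) /\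
  (X = ee a \/ exists r, (a < r <= b)%nat /\ X = cc r).

Lemma X_Q a b : (a <= b)%nat -> Qp a b (length (lcp (lab a) (lab b))).
Proof.
  intro Hab. destruct (Nat.eq_dec a b) as [<-|Hne].
  - rewrite lcp_diag, lab_len. split; [lia|]. split; [intros; lia|]. left; auto.
  - assert (Hlt : (a < b)%nat) by lia.
    assert (Ha : exists p, (p = a \/ p = S a) /\ lab a = w p /\ ee a = cc p).
    { unfold lab, deeper, ee, cc. destruct (Nat.ltb (length (w a)) (length (w (S a)))) eqn:E.
      - apply Nat.ltb_lt in E. exists (S a). split; auto. split; auto. lia.
      - apply Nat.ltb_ge in E. exists a. split; auto. split; auto. lia. }
    assert (Hb : exists q, (q = b \/ (q = S b /\ (cc b < cc (S b))%nat)) /\ lab b = w q).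
    { unfold lab, deeper, cc. destruct (Nat.ltb (length (w b)) (length (w (S b)))) eqn:E.
      - apply Nat.ltb_lt in E. exists (S b). split; auto.
      - exists b. split; auto. }
    destruct Ha as [p [Hp [Lp Ep]]]. destruct Hb as [q [Hq Lq]].
    rewrite Lp, Lq. destruct (PL p q ltac:(lia)) as [P1 [r0 [Hr0 E0]]].
    split; [|split].
    + rewrite Ep. apply P1. lia.
    + intros r Hr. apply P1. lia.
    + destruct (Nat.eq_dec r0 a) as [->|H1].
      * left. rewrite E0. destruct Hp as [->| ->]; [auto|lia].
      * destruct (Nat.eq_dec r0 (S b)) as [->|H2].
        -- exfalso. destruct Hq as [->|[-> Hc]]; [lia|]. specialize (P1 b ltac:(lia)). lia.
        -- right. exists r0. split; auto. lia.
Qed.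

Lemma Q_mono a b x y X Y : (a <= x)%nat -> (x <= y)%nat -> (y <= b)%nat -> Qp a b X -> Qp x y Y -> (X <= Y)%nat.
Proof.
  intros H1 H2 H3 [Q1 [Q2 Q3]] [R1 [R2 R3]].
  destruct R3 as [->|[r [Hr ->]]].
  - destruct (Nat.eq_dec a x) as [<-|Hne]; auto.
    unfold ee. specialize (Q2 x ltac:(lia)). lia.
  - apply Q2. lia.
Qed.
End T.

Definition pre (M y : list nat) : Prop := exists z, y = M ++ z.

Lemma lcp_pre_l u v : pre (lcp u v) u.
Proof.
  revert v; induction u as [|a u IH]; intros [|b v]; simpl.
  - exists []; auto.
  - exists []; auto.
  - exists (a :: u); auto.
  - destruct (Nat.eqb a b).
    + destruct (IH v) as [z Hz]. exists z. simpl. rewrite <- Hz. auto.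
    + exists (a :: u); auto.
Qed.
Lemma lcp_pre_r u v : pre (lcp u v) v.
Proof. rewrite lcp_sym. apply lcp_pre_l. Qed.

Lemma pre_lcp M u v : pre M u -> pre M v -> (length M <= length (lcp u v))%nat.
Proof.
  intros [z1 ->] [z2 ->]. induction M as [|a M IH]; simpl; [lia|].
  rewrite Nat.eqb_refl. simpl. lia.
Qed.

Lemma lcp_pre_len u M y : pre M y -> length (lcp u M) = Nat.min (length (lcp u y)) (length M).
Proof.
  intros [z ->]. revert u; induction M as [|a M IH]; intros u; simpl.
  - rewrite lcp_nil_r. simpl. lia.
  - destruct u as [|b u]; simpl; [lia|].
    destruct (Nat.eqb b a); simpl; [rewrite IH; lia|lia].
Qed.

Lemma mrca_cons2 u v us : mrca (u :: v :: us) = lcp u (mrca (v :: us)).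
Proof. reflexivity. Qed.

Lemma pre_trans M N y : pre M N -> pre N y -> pre M y.
Proof. intros [z1 ->] [z2 ->]. exists (z1 ++ z2). symmetry; apply app_assoc. Qed.
Lemma pre_refl M : pre M M.
Proof. exists []. rewrite app_nil_r; auto. Qed.

Lemma mrca_pre us y : In y us -> pre (mrca us) y.
Proof.
  induction us as [|u us IH]; intro Hy; [destruct Hy|].
  destruct us as [|v us'].
  - destruct Hy as [<-|[]]. apply pre_refl.
  - rewrite mrca_cons2. destruct Hy as [<-|Hy].
    + apply lcp_pre_l.
    + eapply pre_trans. apply lcp_pre_r. apply IH; auto.
Qed.

Lemma mrca_le us x y : In x us -> In y us -> (length (mrca us) <= length (lcp x y))%nat.
Proof. intros; apply pre_lcp; apply mrca_pre; auto. Qed.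

Lemma mrca_ge us m : us <> [] -> (forall x y, In x us -> In y us -> (m <= length (lcp x y))%nat) -> (m <= length (mrca us))%nat.
Proof.
  induction us as [|u us IH]; intros Hne H; [congruence|].
  destruct us as [|v us'].
  - simpl. specialize (H u u (or_introl eq_refl) (or_introl eq_refl)). rewrite lcp_diag in H. auto.
  - rewrite mrca_cons2. rewrite (lcp_pre_len u (mrca (v :: us')) v).
    + apply Nat.min_glb.
      * apply H; simpl; auto.
      * apply IH; [congruence|]. intros x y Hx Hy. apply H; simpl; auto.
    + apply mrca_pre. simpl; auto.
Qed.

Definition minN (L : list nat) : nat := match L with [] => 0%nat | j :: J => fold_right Nat.min j J end.
Definition maxN (L : list nat) : nat := match L with [] => 0%nat | j :: J => fold_right Nat.max j J end.

Lemma minN_in L : L <> [] -> In (minN L) L.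
Proof.
  destruct L as [|j J]; [congruence|]. intros _. simpl. induction J as [|x J IH]; simpl; auto.
  destruct (Nat.min_spec x (fold_right Nat.min j J)) as [[_ ->]|[_ ->]]; simpl; auto.
  destruct IH; auto.
Qed.
Lemma minN_le L x : In x L -> (minN L <= x)%nat.
Proof.
  destruct L as [|j J]; [intros []|]. simpl. intros [<-|Hx].
  - induction J; simpl; lia.
  - induction J as [|y J IH]; simpl in *; [destruct Hx|]. destruct Hx as [<-|Hx]; [lia|]. specialize (IH Hx). lia.
Qed.
Lemma maxN_in L : L <> [] -> In (maxN L) L.
Proof.
  destruct L as [|j J]; [congruence|]. intros _. simpl. induction J as [|x J IH]; simpl; auto.
  destruct (Nat.max_spec x (fold_right Nat.max j J)) as [[_ ->]|[_ ->]]; simpl; auto.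
  destruct IH; auto.
Qed.
Lemma maxN_ge L x : In x L -> (x <= maxN L)%nat.
Proof.
  destruct L as [|j J]; [intros []|]. simpl. intros [<-|Hx].
  - induction J; simpl; lia.
  - induction J as [|y J IH]; simpl in *; [destruct Hx|]. destruct Hx as [<-|Hx]; [lia|]. specialize (IH Hx). lia.
Qed.

Lemma mrca_J t J : J <> [] -> length (mrca (map (lab t) J)) = length (lcp (lab t (minN J)) (lab t (maxN J))).
Proof.
  intro HJ. apply Nat.le_antisymm.
  - apply mrca_le; apply in_map; [apply minN_in|apply maxN_in]; auto.
  - apply mrca_ge. { destruct J; simpl; congruence. }
    intros x y Hx Hy. apply in_map_iff in Hx, Hy. destruct Hx as [i [<- Hi]]. destruct Hy as [j [<- Hj]].
    assert (Hmm : (minN J <= maxN J)%nat) by (pose proof (minN_le J i Hi); pose proof (maxN_ge J i Hi); lia).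
    destruct (Nat.le_ge_cases i j) as [Hij|Hij].
    + apply (Q_mono t (minN J) (maxN J) i j); [apply minN_le; auto | auto | apply maxN_ge; auto | apply X_Q; auto | apply X_Q; auto].
    + rewrite (lcp_sym (lab t i)). apply (Q_mono t (minN J) (maxN J) j i); [apply minN_le; auto | auto | apply maxN_ge; auto | apply X_Q; auto | apply X_Q; auto].
Qed.

Lemma tuples_map {A B} (f : A -> B) k L : tuples k (map f L) = map (map f) (tuples k L).
Proof.
  induction k as [|k IH]; simpl; auto.
  rewrite (flat_map_ext _ (fun x => map (cons x) (map (map f) (tuples k L)))) by (intro; rewrite IH; auto).
  generalize (tuples k L). intro T. clear IH.
  induction L as [|x L IHL]; simpl; auto.
  rewrite map_app, IHL, !map_map. reflexivity.
Qed.

Lemma sum_flat {A} (h : list A -> nat) T L :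
  list_sum (map h (flat_map (fun x => map (cons x) T) L)) = list_sum (map (fun x => list_sum (map (fun u => h (x :: u)) T)) L).
Proof.
  induction L as [|x L IH]; simpl; auto.
  rewrite map_app, list_sum_app, IH, map_map. reflexivity.
Qed.

Lemma sum_perm {A} (h : A -> nat) L L' : Permutation L L' -> list_sum (map h L) = list_sum (map h L').
Proof. intro P. apply Permutation_list_sum. apply Permutation_map. auto. Qed.

Lemma sum_tuples_perm {A} k (h : list A -> nat) L L' : Permutation L L' ->
  list_sum (map h (tuples k L)) = list_sum (map h (tuples k L')).
Proof.
  intro P. revert h; induction k as [|k IH]; intro h; simpl; auto.
  rewrite !sum_flat. rewrite (sum_perm _ _ _ P).
  f_equal. apply map_ext. intro x. apply IH.
Qed.

Lemma sum_tuples_double {A} k (h : list A -> nat) L :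
  list_sum (map h (tuples k (L ++ L))) = (2 ^ k * list_sum (map h (tuples k L)))%nat.
Proof.
  revert h; induction k as [|k IH]; intro h; simpl tuples; [simpl; lia|].
  rewrite !sum_flat.
  rewrite (map_ext _ (fun x => 2 ^ k * list_sum (map (fun u => h (x :: u)) (tuples k L)))%nat) by (intro; apply IH).
  rewrite map_app, list_sum_app.
  assert (E : forall (g : A -> nat) (M : list A), list_sum (map (fun x => 2 ^ k * g x)%nat M) = (2 ^ k * list_sum (map g M))%nat).
  { intros g M; induction M as [|x M IHM]; simpl; [lia|]. rewrite IHM. lia. }
  rewrite !E. rewrite Nat.pow_succ_r'. lia.
Qed.

Lemma labs_seq t : map (lab t) (seq 0 (2 * size t)) = stp (walk t ++ [[];[]]).
Proof.
  rewrite <- stp_idx.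
  assert (HL : (length (walk t ++ [[]; []]) - 1)%nat = (2 * size t)%nat).
  { rewrite <- length_stp. rewrite (Permutation_length (perm_full t)). rewrite length_app. unfold size. lia. }
  rewrite HL. apply map_ext. intro r. unfold lab, w, nth'.
  assert (G : forall m, nth m (walk t ++ [[];[]]) [] = nth m (walk t) []).
  { intro m. destruct (Nat.lt_ge_cases m (length (walk t))).
    - rewrite app_nth1; auto.
    - rewrite app_nth2 by auto. rewrite (nth_overflow (walk t)) by auto.
      destruct (m - length (walk t))%nat as [|[|m']]; simpl; auto. destruct m'; auto. }
  rewrite !G. reflexivity.
Qed.

Lemma sumG t k : list_sum (map (fun J => length (mrca (map (lab t) J))) (tuples k (seq 0 (2 * size t)))) = (2 ^ k * Dk k t)%nat.
Proof.
  rewrite <- (map_map (map (lab t)) (fun us => length (mrca us))).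
  rewrite <- tuples_map, labs_seq.
  rewrite (sum_tuples_perm k _ _ _ (perm_full t)).
  rewrite sum_tuples_double. reflexivity.
Qed.



Lemma cseq_cc t r : nth r (contour_seq t) 0%nat = cc t r.
Proof.
  rewrite contour_walk. change 0%nat with (length (@nil nat)). rewrite map_nth. reflexivity.
Qed.

Lemma cc0 t : cc t 0 = 0%nat.
Proof. unfold cc, w, nth'. destruct (walk_hd t) as [Y ->]. reflexivity. Qed.

Definition Lin t (j : nat) (s : R) : R := (INR j + 1 - s) * INR (cc t j) + (s - INR j) * INR (cc t (S j)).

Lemma Int_part_eq s z : IZR z <= s < IZR z + 1 -> Int_part s = z.
Proof.
  intros [H1 H2]. destruct (base_Int_part s) as [B1 B2].
  assert (A1 : (Int_part s < z + 1)%Z) by (apply lt_IZR; rewrite plus_IZR; simpl; lra).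
  assert (A2 : (z < Int_part s + 1)%Z) by (apply lt_IZR; rewrite plus_IZR; simpl; lra).
  lia.
Qed.

Lemma contour_lin t j s : (INR j <= s \/ j = 0%nat) -> s <= INR j + 1 -> contour t s = Lin t j s.
Proof.
  intros H1 H2. unfold contour, Lin. rewrite !cseq_cc.
  destruct (Rlt_or_le s (INR j + 1)) as [H3|H3].
  - assert (E : Z.to_nat (Int_part s) = j).
    { destruct (Rle_or_lt (INR j) s) as [H4|H4].
      + rewrite (Int_part_eq s (Z.of_nat j)) by (rewrite <- INR_IZR_INZ; lra). apply Nat2Z.id.
      + destruct H1 as [H1|H1]; [lra|]. subst j. simpl in H4.
        destruct (base_Int_part s) as [B1 B2].
        assert (A1 : (Int_part s < 0)%Z) by (apply lt_IZR; simpl; lra).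
        destruct (Int_part s); try lia; reflexivity. }
    rewrite E. reflexivity.
  - assert (E : Z.to_nat (Int_part s) = S j).
    { rewrite (Int_part_eq s (Z.of_nat (S j))) by (rewrite <- INR_IZR_INZ, S_INR; lra). apply Nat2Z.id. }
    rewrite E. rewrite !S_INR. replace s with (INR j + 1) by lra. ring.
Qed.

Lemma adjR t r : Rabs (INR (cc t (S r)) - INR (cc t r)) <= 1.
Proof.
  destruct (adj t r) as [A1 A2]. apply Rabs_le. split.
  - apply le_INR in A2. rewrite S_INR in A2. lra.
  - apply le_INR in A1. rewrite S_INR in A1. lra.
Qed.

Lemma Lin_lip t j s s' : Rabs (Lin t j s - Lin t j s') <= Rabs (s - s').
Proof.
  unfold Lin. replace ((INR j + 1 - s) * INR (cc t j) + (s - INR j) * INR (cc t (S j)) -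
    ((INR j + 1 - s') * INR (cc t j) + (s' - INR j) * INR (cc t (S j))))
    with ((s - s') * (INR (cc t (S j)) - INR (cc t j))) by ring.
  rewrite Rabs_mult. pose proof (adjR t j). pose proof (Rabs_pos (s - s')). nra.
Qed.

Lemma C_lip_aux t m : forall s s', s <= s' <= INR m -> Rabs (contour t s - contour t s') <= s' - s.
Proof.
  induction m as [|m IH]; intros s s' [H1 H2].
  - simpl in H2. rewrite !(contour_lin t 0) by (first [right; reflexivity | simpl; lra]). 
    pose proof (Lin_lip t 0 s s') as H. rewrite (Rabs_minus_sym s s'), (Rabs_right (s' - s)) in H by lra. lra.
  - rewrite S_INR in H2. destruct (Rle_or_lt s' (INR m)) as [H3|H3]; [apply IH; lra|].
    destruct (Rle_or_lt (INR m) s) as [H4|H4].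
    + rewrite !(contour_lin t m) by (first [left; lra | lra]).
      pose proof (Lin_lip t m s s') as H. rewrite (Rabs_minus_sym s s'), (Rabs_right (s' - s)) in H by lra. lra.
    + pose proof (IH s (INR m) ltac:(lra)) as H.
      assert (HB : Rabs (contour t (INR m) - contour t s') <= s' - INR m).
      { rewrite !(contour_lin t m) by (first [left; lra | lra]).
        pose proof (Lin_lip t m (INR m) s') as H0. rewrite (Rabs_minus_sym (INR m) s'), (Rabs_right (s' - INR m)) in H0 by lra. lra. }
      pose proof (Rabs_triang (contour t s - contour t (INR m)) (contour t (INR m) - contour t s')) as HT.
      replace (contour t s - contour t (INR m) + (contour t (INR m) - contour t s')) with (contour t s - contour t s') in HT by ring.
      lra.
Qed.

Lemma nat_above (x : R) : exists m : nat, x <= INR m.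
Proof.
  destruct (INR_archimed 1 x ltac:(lra)) as [m Hm]. exists m. lra.
Qed.

Lemma C_lip t s s' : Rabs (contour t s - contour t s') <= Rabs (s - s').
Proof.
  destruct (Rle_or_lt s s') as [H|H].
  - destruct (nat_above s') as [m Hm]. pose proof (C_lip_aux t m s s' ltac:(lra)).
    rewrite (Rabs_minus_sym s s'), (Rabs_right (s' - s)) by lra. lra.
  - destruct (nat_above s) as [m Hm]. pose proof (C_lip_aux t m s' s ltac:(lra)).
    rewrite (Rabs_minus_sym (contour t s)), (Rabs_right (s - s')) by lra. lra.
Qed.

Lemma Lin_ge t r u m : INR r <= u <= INR r + 1 -> m <= INR (cc t r) -> m <= INR (cc t (S r)) -> m <= Lin t r u.
Proof. intros H1 H2 H3. unfold Lin. nra. Qed.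
Lemma Lin_le t r u m : INR r <= u <= INR r + 1 -> INR (cc t r) <= m -> INR (cc t (S r)) <= m -> Lin t r u <= m.
Proof. intros H1 H2 H3. unfold Lin. nra. Qed.



Section MH.
Variable h : R -> R.
Hypothesis hl : forall u v, Rabs (h u - h v) <= Rabs (u - v).

Lemma mh_props a b : a <= b ->
  (forall u, a <= u <= b -> mh h a b <= h u) /\
  (forall m, (forall u, a <= u <= b -> m <= h u) -> m <= mh h a b).
Proof.
  intro Hab. unfold mh. rewrite Rmin_left, Rmax_right by lra.
  set (E := fun y => exists u, a <= u <= b /\ y = h u).
  destruct (Glb_Rbar_correct E) as [G1 G2].
  assert (L0 : is_lb_Rbar E (Finite (h a - (b - a)))).
  { intros y [u [Hu ->]]. simpl. pose proof (hl u a). apply Rabs_le_between in H.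
    rewrite (Rabs_right (u - a)) in H by lra. lra. }
  assert (Ea : E (h a)) by (exists a; split; [lra|auto]).
  pose proof (G1 _ Ea) as Ga. pose proof (G2 _ L0) as Gb.
  destruct (Glb_Rbar E) as [r| |]; simpl in *; try contradiction.
  split.
  - intros u Hu. assert (E (h u)) by (exists u; auto). specialize (G1 _ H). simpl in G1. auto.
  - intros m Hm. assert (is_lb_Rbar E (Finite m)) by (intros y [u [Hu ->]]; simpl; auto).
    specialize (G2 _ H). simpl in G2. auto.
Qed.

Lemma mh_lip_half a b a' b' d : a <= b -> a' <= b' -> Rabs (a - a') <= d -> Rabs (b - b') <= d ->
  mh h a' b' - d <= mh h a b.
Proof.
  intros H1 H2 H3 H4. apply (proj2 (mh_props a b H1)). intros u Hu.
  set (u' := Rmax a' (Rmin b' u)).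
  assert (Hu' : a' <= u' <= b') by (unfold u', Rmax, Rmin; repeat destruct Rle_dec; lra).
  assert (Hd : Rabs (u - u') <= d).
  { apply Rabs_le_between in H3. apply Rabs_le_between in H4. apply Rabs_le_between.
    unfold u', Rmax, Rmin; repeat destruct Rle_dec; lra. }
  pose proof (proj1 (mh_props a' b' H2) u' Hu'). pose proof (hl u u').
  apply Rabs_le_between in H0. lra.
Qed.

Lemma mh_lip a b a' b' d : a <= b -> a' <= b' -> Rabs (a - a') <= d -> Rabs (b - b') <= d ->
  Rabs (mh h a b - mh h a' b') <= d.
Proof.
  intros H1 H2 H3 H4. apply Rabs_le_between. split.
  - pose proof (mh_lip_half a b a' b' d H1 H2 H3 H4). lra.
  - rewrite Rabs_minus_sym in H3, H4. pose proof (mh_lip_half a' b' a b d H2 H1 H3 H4). lra.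
Qed.
End MH.

Lemma lmin_le xs x : In x xs -> lmin xs <= x.
Proof.
  destruct xs as [|y ys]; [intros []|]. simpl. intros [->|Hx].
  - induction ys as [|z ys IH]; simpl; [lra|]. pose proof (Rmin_r z (fold_right Rmin x ys)). lra.
  - induction ys as [|z ys IH]; simpl in *; [destruct Hx|]. destruct Hx as [<-|Hx].
    + apply Rmin_l.
    + pose proof (Rmin_r z (fold_right Rmin y ys)). specialize (IH Hx). lra.
Qed.
Lemma lmax_ge xs x : In x xs -> x <= lmax xs.
Proof.
  destruct xs as [|y ys]; [intros []|]. simpl. intros [->|Hx].
  - induction ys as [|z ys IH]; simpl; [lra|]. pose proof (Rmax_r z (fold_right Rmax x ys)). lra.
  - induction ys as [|z ys IH]; simpl in *; [destruct Hx|]. destruct Hx as [<-|Hx].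
    + apply Rmax_l.
    + pose proof (Rmax_r z (fold_right Rmax y ys)). specialize (IH Hx). lra.
Qed.
Lemma lmin_in xs : xs <> [] -> In (lmin xs) xs.
Proof.
  destruct xs as [|y ys]; [congruence|]. intros _. simpl. induction ys as [|z ys IH]; simpl; auto.
  destruct (Rle_dec z (fold_right Rmin y ys)).
  - rewrite Rmin_left by auto. simpl; auto.
  - rewrite Rmin_right by lra. simpl in IH |- *; intuition.
Qed.
Lemma lmax_in xs : xs <> [] -> In (lmax xs) xs.
Proof.
  destruct xs as [|y ys]; [congruence|]. intros _. simpl. induction ys as [|z ys IH]; simpl; auto.
  destruct (Rle_dec z (fold_right Rmax y ys)).
  - rewrite Rmax_right by auto. simpl in IH |- *; intuition.
  - rewrite Rmax_left by lra. simpl; auto.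
Qed.
Lemma lmin_lmax xs : lmin xs <= lmax xs.
Proof.
  destruct xs as [|y ys]; [simpl; lra|].
  apply Rle_trans with y; [apply lmin_le|apply lmax_ge]; simpl; auto.
Qed.

Lemma F2_l {A B} (P : A -> B -> Prop) xs ys x : Forall2 P xs ys -> In x xs -> exists y, In y ys /\ P x y.
Proof.
  induction 1; intros Hx; [destruct Hx|]. destruct Hx as [<-|Hx].
  - exists y. split; simpl; auto.
  - destruct (IHForall2 Hx) as [y' [H1 H2]]. exists y'. split; simpl; auto.
Qed.
Lemma F2_r {A B} (P : A -> B -> Prop) xs ys y : Forall2 P xs ys -> In y ys -> exists x, In x xs /\ P x y.
Proof.
  induction 1; intros Hy; [destruct Hy|]. destruct Hy as [<-|Hy].
  - exists x. split; simpl; auto.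
  - destruct (IHForall2 Hy) as [x' [H1 H2]]. exists x'. split; simpl; auto.
Qed.

Definition close (d : R) (xs ys : list R) : Prop := Forall2 (fun x y => Rabs (x - y) <= d) xs ys.

Lemma close_sym d xs ys : close d xs ys -> close d ys xs.
Proof. induction 1; constructor; auto. rewrite Rabs_minus_sym; auto. Qed.

Lemma lmin_close_half d xs ys : close d xs ys -> xs <> [] -> lmin ys <= lmin xs + d.
Proof.
  intros C Hne. destruct (F2_l _ _ _ _ C (lmin_in xs Hne)) as [y [Hy Hd]].
  pose proof (lmin_le ys y Hy). apply Rabs_le_between in Hd. lra.
Qed.
Lemma lmax_close_half d xs ys : close d xs ys -> xs <> [] -> lmax xs <= lmax ys + d.
Proof.
  intros C Hne. destruct (F2_l _ _ _ _ C (lmax_in xs Hne)) as [y [Hy Hd]].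
  pose proof (lmax_ge ys y Hy). apply Rabs_le_between in Hd. lra.
Qed.

Lemma close_nil d xs ys : close d xs ys -> xs = [] -> ys = [].
Proof. intros C ->. inversion C; auto. Qed.

Lemma lmin_close d xs ys : 0 <= d -> close d xs ys -> Rabs (lmin xs - lmin ys) <= d.
Proof.
  intros Hd C. destruct xs as [|x xs'].
  - rewrite (close_nil d [] ys C eq_refl). simpl. rewrite Rminus_0_r, Rabs_R0. auto.
  - assert (Hy : ys <> []) by (inversion C; congruence).
    pose proof (lmin_close_half d _ _ C ltac:(congruence)). pose proof (lmin_close_half d _ _ (close_sym _ _ _ C) Hy).
    apply Rabs_le_between. lra.
Qed.
Lemma lmax_close d xs ys : 0 <= d -> close d xs ys -> Rabs (lmax xs - lmax ys) <= d.
Proof.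
  intros Hd C. destruct xs as [|x xs'].
  - rewrite (close_nil d [] ys C eq_refl). simpl. rewrite Rminus_0_r, Rabs_R0. auto.
  - assert (Hy : ys <> []) by (inversion C; congruence).
    pose proof (lmax_close_half d _ _ C ltac:(congruence)). pose proof (lmax_close_half d _ _ (close_sym _ _ _ C) Hy).
    apply Rabs_le_between. lra.
Qed.

Definition Lip (L : R) (f : list R -> R) : Prop :=
  forall d xs ys, 0 <= d -> close d xs ys -> Rabs (f xs - f ys) <= L * d.

Definition FF (t : tree) (xs : list R) : R := mh (contour t) (2 * lmin xs) (2 * lmax xs).

Lemma FF_lip t : Lip 2 (FF t).
Proof.
  intros d xs ys Hd C. unfold FF. apply mh_lip.
  - apply C_lip.
  - pose proof (lmin_lmax xs); lra.
  - pose proof (lmin_lmax ys); lra.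
  - replace (2 * lmin xs - 2 * lmin ys) with (2 * (lmin xs - lmin ys)) by ring. rewrite Rabs_mult, Rabs_right by lra.
    pose proof (lmin_close d xs ys Hd C). lra.
  - replace (2 * lmax xs - 2 * lmax ys) with (2 * (lmax xs - lmax ys)) by ring. rewrite Rabs_mult, Rabs_right by lra.
    pose proof (lmax_close d xs ys Hd C). lra.
Qed.

Definition incells (xs : list R) (J : list nat) : Prop :=
  Forall2 (fun x j => INR j / 2 <= x <= INR (S j) / 2) xs J.

Lemma incells_ne xs J : incells xs J -> J <> [] -> xs <> [].
Proof. intros C HJ ->. inversion C. congruence. Qed.

Lemma lmin_cell xs J : incells xs J -> J <> [] -> INR (minN J) <= 2 * lmin xs <= INR (minN J) + 1.
Proof.
  intros C HJ. split.
  - destruct (F2_l _ _ _ _ C (lmin_in xs (incells_ne xs J C HJ))) as [j [Hj [Hx _]]].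
    pose proof (le_INR _ _ (minN_le J j Hj)). lra.
  - destruct (F2_r _ _ _ _ C (minN_in J HJ)) as [x [Hx [_ Hx2]]].
    pose proof (lmin_le xs x Hx). rewrite S_INR in Hx2. lra.
Qed.
Lemma lmax_cell xs J : incells xs J -> J <> [] -> INR (maxN J) <= 2 * lmax xs <= INR (maxN J) + 1.
Proof.
  intros C HJ. split.
  - destruct (F2_r _ _ _ _ C (maxN_in J HJ)) as [x [Hx [Hx2 _]]].
    pose proof (lmax_ge xs x Hx). lra.
  - destruct (F2_l _ _ _ _ C (lmax_in xs (incells_ne xs J C HJ))) as [j [Hj [_ Hx]]].
    pose proof (le_INR _ _ (maxN_ge J j Hj)). rewrite S_INR in Hx. lra.
Qed.

Lemma cell_exists a b u : (a <= b)%nat -> INR a <= u <= INR b + 1 -> exists r, (a <= r <= b)%nat /\ INR r <= u <= INR r + 1.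
Proof.
  revert u; induction b as [|b IH]; intros u Hab Hu.
  - exists 0%nat. split; [lia|]. assert (a = 0%nat) by lia. subst. simpl in *. lra.
  - destruct (Rle_or_lt (INR (S b)) u) as [H|H].
    + exists (S b). split; [lia|]. lra.
    + destruct (Nat.eq_dec a (S b)) as [->|Hne]; [lra|].
      rewrite S_INR in H. destruct (IH u ltac:(lia) ltac:(lra)) as [r [Hr Hr2]]. exists r. split; [lia|auto].
Qed.

Lemma FF_bounds t xs J : J <> [] -> incells xs J ->
  INR (length (mrca (map (lab t) J))) - 1 <= FF t xs <= INR (length (mrca (map (lab t) J))).
Proof.
  intros HJ C. rewrite mrca_J by auto.
  set (a := minN J). set (b := maxN J).
  assert (Hab : (a <= b)%nat) by (pose proof (minN_le J _ (minN_in J HJ)); pose proof (maxN_ge J _ (minN_in J HJ)); unfold a, b; lia).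
  destruct (X_Q t a b Hab) as [Q1 [Q2 Q3]].
  set (G := length (lcp (lab t a) (lab t b))) in *.
  pose proof (lmin_cell xs J C HJ) as Hs. pose proof (lmax_cell xs J C HJ) as Hs'.
  fold a in Hs. fold b in Hs'.
  set (s := 2 * lmin xs) in *. set (s' := 2 * lmax xs) in *.
  assert (Hss : s <= s') by (unfold s, s'; pose proof (lmin_lmax xs); lra).
  destruct (mh_props (contour t) (C_lip t) s s' Hss) as [M1 M2].
  unfold FF. fold s s'. split.
  - apply M2. intros u Hu.
    destruct (cell_exists a b u Hab ltac:(lra)) as [r [Hr Hru]].
    rewrite (contour_lin t r) by (first [left; lra | lra]).
    destruct (adj t r) as [A1 A2].
    assert (N : (G <= S (cc t r))%nat /\ (G <= S (cc t (S r)))%nat).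
    { destruct (Nat.eq_dec r a) as [->|Hne].
      - unfold ee in Q1. lia.
      - specialize (Q2 r ltac:(lia)). lia. }
    destruct N as [N1 N2]. apply le_INR in N1, N2. rewrite S_INR in N1, N2.
    apply Lin_ge; lra.
  - destruct Q3 as [E|[r [Hr E]]].
    + apply Rle_trans with (contour t s). apply M1; lra.
      rewrite (contour_lin t a) by (first [left; lra | lra]).
      apply Lin_le; [lra| |]; apply le_INR; rewrite E; unfold ee; lia.
    + assert (Hr1 : INR (S a) <= INR r) by (apply le_INR; lia).
      assert (Hr2 : INR r <= INR b) by (apply le_INR; lia). rewrite S_INR in Hr1.
      apply Rle_trans with (contour t (INR r)). apply M1; lra.
      rewrite (contour_lin t r) by (first [left; lra | lra]). unfold Lin. rewrite E. lra.
Qed.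



Lemma lip_cont (phi : R -> R) K : 0 <= K -> (forall x y, Rabs (phi x - phi y) <= K * Rabs (x - y)) ->
  forall x, continuous phi x.
Proof.
  intros HK Hl x. apply continuity_pt_filterlim.
  unfold continuity_pt, continue_in, limit1_in, limit_in. simpl. unfold R_dist.
  intros eps Heps. exists (eps / (K + 1)). split.
  - apply Rdiv_lt_0_compat; lra.
  - intros y [_ Hy]. pose proof (Hl y x).
    assert (K * Rabs (y - x) <= K * (eps / (K + 1))) by (apply Rmult_le_compat_l; lra).
    assert (K * (eps / (K + 1)) < eps).
    { unfold Rdiv. apply Rmult_lt_reg_r with (K + 1); [lra|].
      rewrite Rmult_assoc, Rmult_assoc, Rinv_l by lra. nra. }
    lra.
Qed.

Lemma ex_RInt_lip (phi : R -> R) K a b : 0 <= K -> (forall x y, Rabs (phi x - phi y) <= K * Rabs (x - y)) ->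
  ex_RInt phi a b.
Proof. intros HK Hl. apply (@ex_RInt_continuous R_CompleteNormedModule). intros z _. apply (lip_cont phi K); auto. Qed.

Lemma RInt_add_const (phi : R -> R) a b c : ex_RInt phi a b -> RInt (fun x => phi x + c) a b = RInt phi a b + (b - a) * c.
Proof.
  intro H. rewrite (RInt_plus phi (fun _ => c)); auto. 2: apply ex_RInt_const.
  rewrite RInt_const. reflexivity.
Qed.

Lemma ex_RInt_addc (phi : R -> R) a b c : ex_RInt phi a b -> ex_RInt (fun x => phi x + c) a b.
Proof. intro H. apply (@ex_RInt_plus R_NormedModule phi (fun _ => c)); auto. apply ex_RInt_const. Qed.

Lemma RInt_le_const (phi : R -> R) a b c : a <= b -> ex_RInt phi a b -> (forall x, a < x < b -> phi x <= c) -> RInt phi a b <= (b - a) * c.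
Proof.
  intros Hab H Hc. rewrite <- (RInt_const a b c) at 1. apply RInt_le; auto. apply ex_RInt_const.
Qed.
Lemma RInt_ge_const (phi : R -> R) a b c : a <= b -> ex_RInt phi a b -> (forall x, a < x < b -> c <= phi x) -> (b - a) * c <= RInt phi a b.
Proof.
  intros Hab H Hc. rewrite <- (RInt_const a b c) at 1. apply RInt_le; auto. apply ex_RInt_const.
Qed.

Lemma close_refl d xs : 0 <= d -> close d xs xs.
Proof. intro. induction xs; constructor; auto. rewrite Rminus_diag, Rabs_R0; auto. Qed.

Lemma lip_cons L f x : Lip L f -> Lip L (fun xs => f (x :: xs)).
Proof. intros H d xs ys Hd C. apply H; auto. constructor; auto. rewrite Rminus_diag, Rabs_R0; auto. Qed.

Lemma lip_pt L f x y xs : Lip L f -> Rabs (f (x :: xs) - f (y :: xs)) <= L * Rabs (x - y).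
Proof. intro H. apply H. apply Rabs_pos. constructor; [lra|]. apply close_refl, Rabs_pos. Qed.

Lemma cube_S k a b f : cube_int (S k) a b f = RInt (fun x => cube_int k a b (fun xs => f (x :: xs))) a b.
Proof. reflexivity. Qed.

Lemma cube_cmp k N : 0 <= N -> forall L f g e, 0 <= L -> Lip L f -> Lip L g -> (forall xs, Rabs (f xs - g xs) <= e) ->
  Rabs (cube_int k 0 N f - cube_int k 0 N g) <= N ^ k * e.
Proof.
  intro HN. induction k as [|k IH]; intros L f g e HL Hf Hg He.
  - simpl. rewrite Rmult_1_l. apply He.
  - rewrite !cube_S.
    assert (Cf : forall h, Lip L h -> forall x y, Rabs (cube_int k 0 N (fun xs => h (x :: xs)) - cube_int k 0 N (fun xs => h (y :: xs))) <= (N ^ k * L) * Rabs (x - y)).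
    { intros h Hh x y. rewrite Rmult_assoc. apply (IH L); auto using lip_cons. intro xs. apply lip_pt; auto. }
    assert (Ef : ex_RInt (fun x => cube_int k 0 N (fun xs => f (x :: xs))) 0 N).
    { apply (ex_RInt_lip _ (N ^ k * L)); [apply Rmult_le_pos; auto; apply pow_le; auto|]. apply Cf; auto. }
    assert (Eg : ex_RInt (fun x => cube_int k 0 N (fun xs => g (x :: xs))) 0 N).
    { apply (ex_RInt_lip _ (N ^ k * L)); [apply Rmult_le_pos; auto; apply pow_le; auto|]. apply Cf; auto. }
    assert (P : forall x, Rabs (cube_int k 0 N (fun xs => f (x :: xs)) - cube_int k 0 N (fun xs => g (x :: xs))) <= N ^ k * e).
    { intro x. apply (IH L); auto using lip_cons. }
    apply Rabs_le_between. split.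
    + assert (RInt (fun x => cube_int k 0 N (fun xs => g (x :: xs))) 0 N <=
              RInt (fun x => cube_int k 0 N (fun xs => f (x :: xs)) + N ^ k * e) 0 N).
      { apply RInt_le; auto. apply ex_RInt_addc; auto.
        intros x _. specialize (P x). apply Rabs_le_between in P. lra. }
      rewrite RInt_add_const in H by auto. simpl. lra.
    + assert (RInt (fun x => cube_int k 0 N (fun xs => f (x :: xs))) 0 N <=
              RInt (fun x => cube_int k 0 N (fun xs => g (x :: xs)) + N ^ k * e) 0 N).
      { apply RInt_le; auto. apply ex_RInt_addc; auto.
        intros x _. specialize (P x). apply Rabs_le_between in P. lra. }
      rewrite RInt_add_const in H by auto. simpl. lra.
Qed.

Lemma cube_phi_lip k N L f : 0 <= N -> 0 <= L -> Lip L f ->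
  forall x y, Rabs (cube_int k 0 N (fun xs => f (x :: xs)) - cube_int k 0 N (fun xs => f (y :: xs))) <= (N ^ k * L) * Rabs (x - y).
Proof.
  intros HN HL Hf x y. rewrite Rmult_assoc. apply (cube_cmp k N HN L); auto using lip_cons. intro xs. apply lip_pt; auto.
Qed.

Definition sumR (l : list R) : R := fold_right Rplus 0 l.

Lemma sumR_app l1 l2 : sumR (l1 ++ l2) = sumR l1 + sumR l2.
Proof. induction l1; simpl; [lra|]. unfold sumR in *. simpl. rewrite IHl1. lra. Qed.

Lemma sumR_le {A} (f g : A -> R) L : (forall x, In x L -> f x <= g x) -> sumR (map f L) <= sumR (map g L).
Proof.
  induction L as [|x L IH]; intro H; simpl; [lra|]. unfold sumR in *. simpl.
  apply Rplus_le_compat; [apply H; simpl; auto|apply IH; intros; apply H; simpl; auto].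
Qed.

Lemma sumR_scal {A} (f : A -> R) c L : sumR (map (fun x => c * f x) L) = c * sumR (map f L).
Proof. induction L; unfold sumR in *; simpl; [ring|]. rewrite IHL. ring. Qed.

Lemma sumR_flat {A} (h : list A -> R) T L :
  sumR (map h (flat_map (fun x => map (cons x) T) L)) = sumR (map (fun x => sumR (map (fun u => h (x :: u)) T)) L).
Proof.
  induction L as [|x L IH]; simpl; auto.
  rewrite map_app, sumR_app, IH, map_map. reflexivity.
Qed.

Lemma chasles_split (phi : R -> R) : (forall a b, ex_RInt phi a b) -> forall m,
  RInt phi 0 (INR m / 2) = sumR (map (fun j => RInt phi (INR j / 2) (INR (S j) / 2)) (seq 0 m)).
Proof.
  intros Hex m. induction m as [|m IH].
  - simpl. replace (0 / 2) with 0 by lra. rewrite RInt_point. reflexivity.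
  - rewrite seq_S, Nat.add_0_l, map_app, sumR_app, <- IH.
    change (sumR (map (fun j => RInt phi (INR j / 2) (INR (S j) / 2)) [m])) with (RInt phi (INR m / 2) (INR (S m) / 2) + 0).
    rewrite Rplus_0_r.
    rewrite <- (RInt_Chasles phi 0 (INR m / 2) (INR (S m) / 2)) by auto. reflexivity.
Qed.

Lemma in_cell_cons x j xs J : INR j / 2 <= x <= INR (S j) / 2 -> incells xs J -> incells (x :: xs) (j :: J).
Proof. intros; constructor; auto. Qed.

Lemma cube_upper (Nn : nat) k : forall L f (H : list nat -> R), 0 <= L -> Lip L f ->
  (forall xs J, length J = k -> List.Forall (fun j => (j < 2 * Nn)%nat) J -> incells xs J -> f xs <= H J) ->
  cube_int k 0 (INR Nn) f <= (/2) ^ k * sumR (map H (tuples k (seq 0 (2 * Nn)))).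
Proof.
  induction k as [|k IH]; intros L f H HL Hf HH.
  - simpl. unfold sumR; simpl. rewrite Rplus_0_r, Rmult_1_l. apply HH; auto; constructor.
  - rewrite cube_S. cbn [tuples]. rewrite sumR_flat.
    set (phi := fun x => cube_int k 0 (INR Nn) (fun xs => f (x :: xs))).
    assert (Hex : forall a b, ex_RInt phi a b).
    { intros a b. apply (ex_RInt_lip _ (INR Nn ^ k * L)). apply Rmult_le_pos; auto. apply pow_le, pos_INR.
      apply cube_phi_lip; auto. apply pos_INR. }
    replace (RInt phi 0 (INR Nn)) with (RInt phi 0 (INR (2 * Nn) / 2)) by (f_equal; rewrite mult_INR; simpl; lra).
    rewrite (chasles_split phi Hex).
    rewrite <- sumR_scal. apply sumR_le. intros j Hj. apply in_seq in Hj.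
    replace ((/ 2) ^ S k * sumR (map (fun u => H (j :: u)) (tuples k (seq 0 (2 * Nn)))))
      with ((INR (S j) / 2 - INR j / 2) * ((/ 2) ^ k * sumR (map (fun u => H (j :: u)) (tuples k (seq 0 (2 * Nn)))))).
    2: { rewrite S_INR. simpl. field. }
    apply RInt_le_const. { rewrite S_INR. lra. } apply Hex.
    intros x Hx. unfold phi. apply (IH L); auto using lip_cons.
    intros xs J HJ HF HC. apply HH. simpl; auto. constructor; auto. lia.
    apply in_cell_cons; auto. lra.
Qed.

Lemma cube_lower (Nn : nat) k : forall L f (H : list nat -> R), 0 <= L -> Lip L f ->
  (forall xs J, length J = k -> List.Forall (fun j => (j < 2 * Nn)%nat) J -> incells xs J -> H J <= f xs) ->
  (/2) ^ k * sumR (map H (tuples k (seq 0 (2 * Nn)))) <= cube_int k 0 (INR Nn) f.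
Proof.
  induction k as [|k IH]; intros L f H HL Hf HH.
  - simpl. unfold sumR; simpl. rewrite Rplus_0_r, Rmult_1_l. apply HH; auto; constructor.
  - rewrite cube_S. cbn [tuples]. rewrite sumR_flat.
    set (phi := fun x => cube_int k 0 (INR Nn) (fun xs => f (x :: xs))).
    assert (Hex : forall a b, ex_RInt phi a b).
    { intros a b. apply (ex_RInt_lip _ (INR Nn ^ k * L)). apply Rmult_le_pos; auto. apply pow_le, pos_INR.
      apply cube_phi_lip; auto. apply pos_INR. }
    replace (RInt phi 0 (INR Nn)) with (RInt phi 0 (INR (2 * Nn) / 2)) by (f_equal; rewrite mult_INR; simpl; lra).
    rewrite (chasles_split phi Hex).
    rewrite <- sumR_scal. apply sumR_le. intros j Hj. apply in_seq in Hj.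
    replace ((/ 2) ^ S k * sumR (map (fun u => H (j :: u)) (tuples k (seq 0 (2 * Nn)))))
      with ((INR (S j) / 2 - INR j / 2) * ((/ 2) ^ k * sumR (map (fun u => H (j :: u)) (tuples k (seq 0 (2 * Nn)))))).
    2: { rewrite S_INR. simpl. field. }
    apply RInt_ge_const. { rewrite S_INR. lra. } apply Hex.
    intros x Hx. unfold phi. apply (IH L); auto using lip_cons.
    intros xs J HJ HF HC. apply HH. simpl; auto. constructor; auto. lia.
    apply in_cell_cons; auto. lra.
Qed.



Lemma sumR_INR {A} (g : A -> nat) T : sumR (map (fun J => INR (g J)) T) = INR (list_sum (map g T)).
Proof. induction T as [|x T IH]; simpl; auto. unfold sumR in *; simpl. rewrite IH, plus_INR. reflexivity. Qed.

Lemma sumR_m1 {A} (F : A -> R) T : sumR (map (fun J => F J - 1) T) = sumR (map F T) - INR (length T).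
Proof. induction T as [|x T IH]; unfold sumR in *; cbn [map fold_right length]; [simpl; lra|]. rewrite IH, S_INR. lra. Qed.

Lemma length_tuples {A} k (L : list A) : length (tuples k L) = (length L ^ k)%nat.
Proof.
  induction k as [|k IH]; simpl; auto.
  assert (E : forall (T : list (list A)) M, length (flat_map (fun x => map (cons x) T) M) = (length M * length T)%nat).
  { intros T M. induction M as [|x M IHM]; simpl; auto. rewrite length_app, length_map, IHM. lia. }
  rewrite E, IH. reflexivity.
Qed.

Lemma half_pow k x : (/ 2) ^ k * (INR (2 ^ k) * x) = x.
Proof.
  rewrite pow_INR. simpl INR. rewrite <- Rmult_assoc, <- Rpow_mult_distr.
  replace (/ 2 * (1 + 1)) with 1 by field. rewrite pow1. ring.
Qed.

Theorem lemma7p1 (t : tree) (k : nat) (hk : (1 <= k)%nat) :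
  0 <= INR (Dk k t) - calDk k t <= INR (size t) ^ k.
Proof.
  set (g := fun J => length (mrca (map (lab t) J))).
  set (T := tuples k (seq 0 (2 * size t))).
  assert (Hne : forall J : list nat, length J = k -> J <> []) by (intros J HJ ->; simpl in HJ; lia).
  assert (Up : calDk k t <= INR (Dk k t)).
  { unfold calDk. change (fun xs => mh (contour t) (2 * lmin xs) (2 * lmax xs)) with (FF t).
    eapply Rle_trans.
    - apply (cube_upper (size t) k 2 (FF t) (fun J => INR (g J))); [lra|apply FF_lip|].
      intros xs J HJ _ HC. apply (FF_bounds t xs J (Hne J HJ) HC).
    - fold T. rewrite sumR_INR. unfold g, T. rewrite sumG, mult_INR. rewrite half_pow. lra. }
  assert (Lo : INR (Dk k t) - INR (size t) ^ k <= calDk k t).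
  { unfold calDk. change (fun xs => mh (contour t) (2 * lmin xs) (2 * lmax xs)) with (FF t).
    eapply Rle_trans.
    2: { apply (cube_lower (size t) k 2 (FF t) (fun J => INR (g J) - 1)); [lra|apply FF_lip|].
      intros xs J HJ _ HC. apply (FF_bounds t xs J (Hne J HJ) HC). }
    fold T. rewrite sumR_m1, sumR_INR. unfold g, T. rewrite sumG, length_tuples, length_seq.
    rewrite Rmult_minus_distr_l, mult_INR, half_pow.
    rewrite Nat.pow_mul_l, mult_INR, half_pow, pow_INR. lra. }
  lra.
Qed.
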